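(* Let $f:\mathcal{X}\to\Delta^{k-1}$ be a classifier outputting confidence vectors. Let $P_S$ and $P_T$ be source and target distributions over $\mathcal{X}\times\mathcal{Y}$ with $k$ classes, and write $P_S(y)$, $P_T(y)$ for the source and target label distributions, viewed as distributions over one-hot vectors $\{0,1\}^k\cap\Delta^{k-1}$. Let $f_\# P_T(c)$ be the distribution of $f(x)$ for $x\sim P_T(x)$, and let $P_{\mathrm{pseudo}}(y)$ be the distribution of the one-hot vector $e_{\arg\max_j f_j(x)}$ for $x\sim P_T(x)$. Define $\hat\epsilon_{\mathrm{COT}}=W_\infty\bigl(f_\# P_T(c),P_S(y)\bigr)$. If $P_T(y)=P_S(y)$, then $$\hat\epsilon_{\mathrm{COT}}\ \ge\ 0.5\,W_\infty\bigl(P_{\mathrm{pseudo}}(y),P_T(y)\bigr).$$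
   Context: $\Delta^{k-1}=\{c\in\mathbb{R}^k: c_j\ge 0,\ \sum_j c_j=1\}$; $e_i$ is the $i$-th standard basis vector. For probability distributions $P,Q$ on $\mathbb{R}^k$, $W_\infty(P,Q)=\inf_{\pi\in\Pi(P,Q)}\int\|u-v\|_\infty\,d\pi(u,v)$ over couplings $\pi$ of $P$ and $Q$ (optimal transport distance with ground cost $\|u-v\|_\infty$). Ties in $\arg\max$ are broken by a fixed rule (e.g. smallest index). *)

(* Defs.v *)
From HB Require Import structures.
From mathcomp Require Import all_boot all_order all_algebra.
From mathcomp Require Import all_classical all_reals all_analysis.
Set Implicit Arguments. Unset Strict Implicit. Unset Printing Implicit Defensive.
Import Order.TTheory GRing.Theory Num.Theory.
Local Open Scope classical_set_scope.
Local Open Scope ring_scope.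

HB.instance Definition _ (k : nat) := isPointed.Build 'I_k.+1 ord0.

HB.instance Definition _ (k : nat) := @isMeasurable.Build default_measure_display
  'I_k.+1 discrete_measurable discrete_measurable0
  discrete_measurableC discrete_measurableU.

Section Defs.
Variable R : realType.

(* R^n is modelled as n.-tuple R with the product (= Borel) sigma-algebra. *)
Definition supnorm_dist n (u v : n.-tuple R) : R :=
  \big[Num.max/0]_(i < n) `|tnth u i - tnth v i|.

Definition simplex n : set (n.-tuple R) :=
  [set c | (forall i, 0 <= tnth c i) /\ \sum_(i < n) tnth c i = 1].

Definition onehot n (i : 'I_n) : n.-tuple R := [tuple (i == j)%:R | j < n].

(* arg max_j c_j, ties broken by smallest index *)
Definition argmax k (c : k.+1.-tuple R) : 'I_k.+1 :=
  inord (find (fun x => all (fun y => y <= x) c) c).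

Definition coupling n (P Q : set (n.-tuple R) -> \bar R)
    (pi : probability (n.-tuple R * n.-tuple R)%type R) : Prop :=
  forall A : set (n.-tuple R), measurable A ->
    pi (fst @^-1` A) = P A /\ pi (snd @^-1` A) = Q A.

(* optimal transport distance with ground cost ||u - v||_inf *)
Definition W_inf n (P Q : set (n.-tuple R) -> \bar R) : \bar R :=
  ereal_inf [set (\int[pi]_z (supnorm_dist z.1 z.2)%:E)%E
            | pi in [set pi | coupling P Q pi]].
End Defs.

(* Main.v *)
Require Import Defs.
From HB Require Import structures.
From mathcomp Require Import all_boot all_order all_algebra.
From mathcomp Require Import all_classical all_reals all_analysis.
From mathcomp Require Import measurable_realfun.
From mathcomp Require Import lra.
Import Order.TTheory GRing.Theory Num.Theory.
Local Open Scope classical_set_scope.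
Local Open Scope ring_scope.

Module Helpers.
Set Implicit Arguments. Unset Strict Implicit.

Section Aux.
Variable R : realType.

Lemma exists_max (s : seq R) x0 :
  exists2 x, x \in x0 :: s & all (fun y => y <= x) (x0 :: s).
Proof.
elim: s x0 => [|a s IH] x0.
  by exists x0; rewrite ?inE ?eqxx //= lexx.
have [x xin /allP xall] := IH a.
case: (leP x x0) => h.
  exists x0; first by rewrite inE eqxx.
  apply/allP => y; rewrite inE => /orP[/eqP->|yin]; first exact: lexx.
  exact: le_trans (xall _ yin) h.
exists x; first by rewrite inE xin orbT.
apply/allP => y; rewrite inE => /orP[/eqP->|yin]; [exact: ltW | exact: xall].
Qed.

Lemma argmaxP n (c : n.+1.-tuple R) (i : 'I_n.+1) :
  argmax c = i <-> (forall l, tnth c l <= tnth c i) /\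
    (forall j : 'I_n.+1, (j < i)%N -> exists l, tnth c j < tnth c l).
Proof.
set p := (fun x => all (fun y => y <= x) c).
have hp : has p c.
  rewrite /p; clear p; case: c => s0 sz /=; case: s0 sz => [//|x0 s] sz.
  have [x xin xall] := exists_max s x0.
  by apply/hasP; exists x.
have fs : (find p c < n.+1)%N by rewrite -[X in (_ < X)%N](size_tuple c) -has_find.
have pE : forall x, p x -> forall l, tnth c l <= x.
  by move=> x /allP h l; apply: h; exact: mem_tnth.
rewrite /argmax -/p.
split.
- move=> <-; split.
    by move=> l; rewrite [tnth c (inord _)](tnth_nth 0) inordK //; apply: pE; exact: nth_find.
  move=> j; rewrite inordK // => hj.
  have := before_find 0 hj; rewrite /p => /negbT.
  rewrite -has_predC => /hasP[y /tnthP[l ->]] /=; rewrite -ltNge => hl.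
  by exists l; rewrite (tnth_nth 0).
- move=> [h1 h2]; apply: val_inj; rewrite /= inordK //.
  case: (ltngtP (find p c) i) => // h.
  + have [l hl] := h2 (Ordinal fs) h.
    have := pE _ (nth_find 0 hp) l.
    by rewrite -(tnth_nth 0 c (Ordinal fs)) leNgt hl.
  + have := before_find 0 h; rewrite /p -(tnth_nth 0 c i) => /negbT/negP H; exfalso; apply: H.
    apply/allP => y /tnthP[l ->]; exact: h1.
Qed.


Lemma measurable_le n (a b : 'I_n) :
  measurable [set c : n.-tuple R | tnth c a <= tnth c b].
Proof.
have H : measurable ([set: n.-tuple R] `&`
   (fun c : n.-tuple R => tnth c a <= tnth c b) @^-1` [set true]).
  by apply: measurable_fun_ler => //; exact: measurable_tnth.
by rewrite setTI in H.
Qed.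

Lemma measurable_lt n (a b : 'I_n) :
  measurable [set c : n.-tuple R | tnth c a < tnth c b].
Proof.
have H : measurable ([set: n.-tuple R] `&`
   (fun c : n.-tuple R => tnth c a < tnth c b) @^-1` [set true]).
  by apply: measurable_fun_ltr => //; exact: measurable_tnth.
by rewrite setTI in H.
Qed.

Lemma measurable_argmax n (i : 'I_n.+1) :
  measurable [set c : n.+1.-tuple R | argmax c = i].
Proof.
rewrite (_ : [set c | _] =
  (\bigcap_(l in [set: 'I_n.+1]) [set c | tnth c l <= tnth c i]) `&`
  \bigcap_(j in [set j : 'I_n.+1 | (j < i)%N])
     \bigcup_(l in [set: 'I_n.+1]) [set c | tnth c j < tnth c l]).
  apply: measurableI; apply: fin_bigcap_measurable; try exact: finite_finset.
    by move=> l _; exact: measurable_le.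
  move=> j _; apply: fin_bigcup_measurable; first exact: finite_finset.
  by move=> l _; exact: measurable_lt.
apply/seteqP; split => c /=.
  move/argmaxP => [h1 h2]; split; first by move=> l _; exact: h1.
  by move=> j /= hj; have [l hl] := h2 j hj; exists l.
move=> [h1 h2]; apply/argmaxP; split; first by move=> l; exact: h1.
by move=> j hj; have [l _ hl] := h2 j hj; exists l.
Qed.

Lemma measurable_oa n :
  measurable_fun [set: n.+1.-tuple R] (fun c => onehot R (argmax c)).
Proof.
move=> _ A _; rewrite setTI.
rewrite (_ : _ @^-1` A =
  \bigcup_(i in [set i : 'I_n.+1 | A (onehot R i)]) [set c | argmax c = i]).
  apply: fin_bigcup_measurable; first exact: finite_finset.
  by move=> i _; exact: measurable_argmax.
apply/seteqP; split => c /=; first by move=> h; exists (argmax c).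
by move=> [i hi ->].
Qed.

Lemma measurable_sd n :
  measurable_fun [set: (n.-tuple R * n.-tuple R)%type]
    (fun z => supnorm_dist z.1 z.2).
Proof.
rewrite /supnorm_dist.
have H : forall s : seq 'I_n, measurable_fun [set: (n.-tuple R * n.-tuple R)%type]
  (fun z => \big[Num.max/0]_(i <- s) `|tnth z.1 i - tnth z.2 i|).
  elim => [|a s IH].
    under eq_fun do rewrite big_nil.
    exact: measurable_cst.
  under eq_fun do rewrite big_cons.
  apply: measurable_maxr => //.
  apply: measurableT_comp; first exact: normr_measurable.
  apply: measurable_funB.
    exact: measurableT_comp (measurable_tnth a) measurable_fst.
  exact: measurableT_comp (measurable_tnth a) measurable_snd.
exact: H.
Qed.

Lemma sd_ge0 n (u v : n.-tuple R) : 0 <= supnorm_dist u v.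
Proof.
rewrite /supnorm_dist; elim/big_ind: _ => //= x y hx hy.
by rewrite le_max hx.
Qed.

Lemma key n (c : n.+1.-tuple R) (i : 'I_n.+1) :
  supnorm_dist (onehot R (argmax c)) (onehot R i) <=
  2 * supnorm_dist c (onehot R i).
Proof.
have tO : forall (a b : 'I_n.+1), tnth (onehot R a) b = (a == b)%:R.
  by move=> a b; rewrite tnth_mktuple.
set j := argmax c.
have [hji|hji] := eqVneq j i.
  rewrite hji; apply: (@le_trans _ _ 0).
    by rewrite /supnorm_dist; apply: bigmax_le => // l _; rewrite subrr normr0.
  by rewrite mulr_ge0 // sd_ge0.
have h1 : supnorm_dist (onehot R j) (onehot R i) <= 1.
  rewrite /supnorm_dist; apply: bigmax_le => // l _; rewrite !tO.
  by case: (j == l); case: (i == l) => /=;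
    rewrite ?subrr ?normr0 ?sub0r ?subr0 ?normrN ?normr1.
have [hj _] := (argmaxP c j).1 erefl.
have Hi := le_bigmax 0 (fun l => `|tnth c l - tnth (onehot R i) l|) i.
have Hj := le_bigmax 0 (fun l => `|tnth c l - tnth (onehot R i) l|) j.
rewrite /= !tO eqxx eq_sym (negbTE hji) subr0 in Hi Hj.
have a1 : 1 - tnth c i <= `|tnth c i - 1| by rewrite distrC ler_norm.
have a2 : tnth c j <= `|tnth c j| by rewrite ler_norm.
have a3 := hj i.
rewrite -/(supnorm_dist c (onehot R i)) in Hi Hj.
apply: le_trans h1 _.
lra.
Qed.


Lemma measurable_tuple1 n (v : n.-tuple R) : measurable [set v].
Proof.
rewrite (_ : [set v] = \bigcap_(l in [set: 'I_n])
   [set c : n.-tuple R | tnth c l = tnth v l]).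
  apply: fin_bigcap_measurable; first exact: finite_finset.
  move=> l _.
  have H : measurable ([set: n.-tuple R] `&`
     (fun c : n.-tuple R => tnth c l) @^-1` [set tnth v l]).
    by apply: measurable_tnth => //; exact: measurable_set1.
  by rewrite setTI in H.
apply/seteqP; split => c /=; first by move=> -> l.
by move=> h; apply: eq_from_tnth => l; exact: h.
Qed.

Lemma measurable_onehots n :
  measurable [set e : n.+1.-tuple R | exists i, e = onehot R i].
Proof.
rewrite (_ : [set e : n.+1.-tuple R | exists i, e = onehot R i] =
  \bigcup_(i in [set: 'I_n.+1]) [set onehot R i]).
  apply: fin_bigcup_measurable; first exact: finite_finset.
  by move=> i _; exact: measurable_tuple1.
apply/seteqP; split => c /=; first by move=> [i ->]; exists i.
by move=> [i _ ->]; exists i.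
Qed.

End Aux.
End Helpers.
Import Helpers.

Theorem mainTheorem3 (R : realType) (d : measure_display) (X : measurableType d)
  (k : nat) (f : X -> k.+1.-tuple R)
  (f_meas : measurable_fun [set: X] f)
  (f_simplex : forall x, simplex (f x))
  (P_S P_T : probability (X * 'I_k.+1)%type R) :
  (forall A : set (k.+1.-tuple R), measurable A ->
     pushforward P_T (fun z => onehot R z.2) A =
     pushforward P_S (fun z => onehot R z.2) A) ->
  ((2%:R)^-1%:E *
     W_inf (pushforward P_T (fun z => onehot R (argmax (f z.1))))
           (pushforward P_T (fun z => onehot R z.2))
   <= W_inf (pushforward P_T (fun z => f z.1))
            (pushforward P_S (fun z => onehot R z.2)))%E.
Proof.
move=> hST.
apply/ereal_infP => _ [pi cpi <-].
pose oa := fun c : k.+1.-tuple R => onehot R (argmax c).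
pose g := fun z : (k.+1.-tuple R * k.+1.-tuple R)%type => (oa z.1, z.2).
have mg : measurable_fun [set: (k.+1.-tuple R * k.+1.-tuple R)%type] g.
  apply: measurable_fun_pair; last exact: measurable_snd.
  by apply: measurableT_comp; [exact: measurable_oa | exact: measurable_fst].
pose gm : {mfun _ >-> _} := HB.pack g (isMeasurableFun.Build _ _ _ _ _ mg).
pose pi' := distribution pi gm.
have cpi' : coupling (pushforward P_T (fun z => onehot R (argmax (f z.1))))
                     (pushforward P_T (fun z => onehot R z.2)) pi'.
  move=> A mA; split.
    have mOA : measurable (oa @^-1` A).
      by have := measurable_oa measurableT mA; rewrite setTI.
    exact: (cpi _ mOA).1.
  rewrite hST //; exact: (cpi A mA).2.
have msd := @measurable_sd R k.+1.
have msdE : measurable_fun [set: (k.+1.-tuple R * k.+1.-tuple R)%type]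
    (fun z => (supnorm_dist z.1 z.2)%:E).
  exact/measurable_EFinP.
apply: (@le_trans _ _ ((2%:R)^-1%:E * \int[pi']_z (supnorm_dist z.1 z.2)%:E)%E).
  apply: lee_wpmul2l; first by rewrite lee_fin invr_ge0.
  by apply: ereal_inf_lbound; exists pi'.
rewrite ge0_integral_distribution //; last by move=> y; rewrite lee_fin sd_ge0.
have mO := @measurable_onehots R k.
apply: (@le_trans _ _ ((2%:R)^-1%:E * \int[pi]_z ((2%:R)%:E * (supnorm_dist z.1 z.2)%:E))%E); last first.
  rewrite ge0_integralZl_EFin //; last by move=> z _; rewrite lee_fin sd_ge0.
  by rewrite muleA -EFinM mulVf ?mul1e.
apply: lee_wpmul2l; first by rewrite lee_fin invr_ge0.
apply: ae_ge0_le_integral => //.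
- by move=> z _; rewrite lee_fin sd_ge0.
- exact: measurableT_comp msdE mg.
- by move=> z _; rewrite -EFinM lee_fin mulr_ge0 // sd_ge0.
- apply: measurable_funeM; exact: msdE.
exists (snd @^-1` (~` [set e : k.+1.-tuple R | exists i, e = onehot R i])); split.
- have H : measurable ([set: (k.+1.-tuple R * k.+1.-tuple R)%type] `&`
     snd @^-1` (~` [set e : k.+1.-tuple R | exists i, e = onehot R i])).
    by apply: measurable_snd => //; exact: measurableC.
  by rewrite setTI in H.
- transitivity (pushforward P_S (fun z : X * 'I_k.+1 => onehot R z.2)
     (~` [set e : k.+1.-tuple R | exists i, e = onehot R i])).
    exact: (cpi _ (measurableC mO)).2.
  rewrite /pushforward.
  rewrite (_ : _ @^-1` _ = set0) ?measure0 //.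
  by apply/seteqP; split => z //= h; apply: h; exists z.2.
- move=> z /= hz HO; apply: hz => _.
  case: HO => i ->; rewrite -EFinM lee_fin; exact: key.
Qed.
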